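(* Let $F$ be a finite field of order $p^n$, where $p$ is a prime and $n\geq 1$, and let $G=\Gamma(Tr(F))$. Then $$|E(G)|=\tfrac12\,p^n\,(p^{2n}-1)\,(p^{2n}-p^n-1).$$
   Context: For a ring $S$ with identity whose center is not all of $S$, the commuting graph $\Gamma(S)$ is the simple graph with vertex set $S\setminus Z(S)$ ($Z(S)$ the center), in which two distinct vertices $a,b$ are adjacent iff $ab=ba$; $E(G)$ denotes the edge set. $Tr(F)$ denotes the ring of all $2\times 2$ upper triangular matrices over $F$. *)

(* Defs.v *)
From mathcomp Require Import all_boot all_algebra.
Set Implicit Arguments. Unset Strict Implicit. Unset Printing Implicit Defensive.
Import GRing.Theory.
Local Open Scope ring_scope.

(* A finite ring given as a subring S (a finite set closed under the ring
   operations) of an ambient finite ring R; multiplication is that of R. *)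

Definition center_in (R : finNzRingType) (S : {set R}) : {set R} :=
  [set a in S | [forall b in S, a * b == b * a]].

Definition cgraph_vertices (R : finNzRingType) (S : {set R}) : {set R} :=
  S :\: center_in S.

Definition cgraph_edges (R : finNzRingType) (S : {set R}) : {set {set R}} :=
  [set e : {set R} | [exists a in cgraph_vertices S, exists b in cgraph_vertices S,
     [&& a != b, a * b == b * a & e == [set a; b]]]].

(* Tr(F): the ring of 2x2 upper triangular matrices over F, as a subring of
   M_2(F): the entry in row 1, column 0 (below the diagonal) is zero. *)
Definition Tr (F : finFieldType) : {set 'M[F]_2} :=
  [set A : 'M[F]_2 | A ord_max ord0 == 0].

(* Main.v *)
Require Import Defs.
From mathcomp Require Import all_boot all_algebra ring.
Set Implicit Arguments. Unset Strict Implicit. Unset Printing Implicit Defensive.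
Import GRing.Theory.
Local Open Scope ring_scope.

Section M.
Variable F : finFieldType.
Local Notation M := 'M[F]_2.
Local Notation i0 := (ord0 : 'I_2).
Local Notation i1 := (ord_max : 'I_2).

Lemma ord2P (i : 'I_2) : i = i0 \/ i = i1.
Proof. case: i => [[|[|m]] Hi] //; [left|right]; exact: val_inj. Qed.

Definition phi (x y z : F) : M :=
  \matrix_(i, j) (if i == i0 then (if j == i0 then x else y)
                  else (if j == i0 then 0 else z)).

Lemma phiE x y z : [/\ phi x y z i0 i0 = x, phi x y z i0 i1 = y,
  phi x y z i1 i0 = 0 & phi x y z i1 i1 = z].
Proof. by rewrite !mxE. Qed.

Lemma inTr (A : M) : (A \in Tr F) = (A i1 i0 == 0).
Proof. by rewrite inE. Qed.

Lemma phi_Tr x y z : phi x y z \in Tr F.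
Proof. by rewrite inTr mxE. Qed.

Lemma Tr_phi (A : M) : A \in Tr F -> A = phi (A i0 i0) (A i0 i1) (A i1 i1).
Proof.
rewrite inTr => /eqP H; apply/matrixP => i j; rewrite mxE.
by case: (ord2P i) => ->; case: (ord2P j) => ->.
Qed.

Lemma mulE (A B : M) i j : (A * B) i j = A i i0 * B i0 j + A i i1 * B i1 j.
Proof.
rewrite -mulmxE mxE big_ord_recl big_ord1; congr (_ + A i _ * B _ j); exact: val_inj.
Qed.

Lemma comm_Tr (A B : M) : A \in Tr F -> B \in Tr F ->
  (A * B == B * A) = (B i0 i1 * (A i0 i0 - A i1 i1) == A i0 i1 * (B i0 i0 - B i1 i1)).
Proof.
rewrite !inTr => /eqP HA /eqP HB.
apply/eqP/eqP => [/matrixP H0|H].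
  have := H0 i0 i1.
  rewrite !mulE => H.
  apply/eqP; rewrite -subr_eq0; apply/eqP.
  transitivity ((A i0 i0 * B i0 i1 + A i0 i1 * B i1 i1) - (B i0 i0 * A i0 i1 + B i0 i1 * A i1 i1)); first ring.
  by rewrite H subrr.
apply/matrixP => i j; rewrite !mulE.
case: (ord2P i) => ->; case: (ord2P j) => ->; rewrite ?HA ?HB.
all: rewrite ?mul0r ?mulr0 ?addr0 ?add0r //; try ring.
move/eqP: H; rewrite -subr_eq0 => /eqP H.
apply/eqP; rewrite -subr_eq0; apply/eqP; rewrite -H; ring.
Qed.

Lemma phi00 x y z : phi x y z i0 i0 = x. Proof. by rewrite mxE. Qed.
Lemma phi01 x y z : phi x y z i0 i1 = y. Proof. by rewrite mxE. Qed.
Lemma phi11 x y z : phi x y z i1 i1 = z. Proof. by rewrite mxE. Qed.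

Lemma phi_inj x y z x' y' z' : phi x y z = phi x' y' z' -> [/\ x = x', y = y' & z = z'].
Proof.
move=> H; split.
- by rewrite -(phi00 x y z) H phi00.
- by rewrite -(phi01 x y z) H phi01.
- by rewrite -(phi11 x y z) H phi11.
Qed.

Lemma center_char (A : M) : (A \in center_in (Tr F)) =
  [&& A \in Tr F, A i0 i1 == 0 & A i0 i0 == A i1 i1].
Proof.
rewrite inE; case TrA: (A \in Tr F) => //=.
apply/forall_inP/andP => [H|[/eqP b0 /eqP d0] B TB].
  have h1 := H _ (phi_Tr 1 0 0); have h2 := H _ (phi_Tr 0 1 0).
  rewrite comm_Tr ?phi_Tr // !phi00 !phi01 !phi11 in h1.
  rewrite comm_Tr ?phi_Tr // !phi00 !phi01 !phi11 in h2.
  move: h1 h2; rewrite mul0r subr0 mulr1 subrr mulr0 mul1r eq_sym => -> /=.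
  by rewrite subr_eq0.
by rewrite comm_Tr // b0 d0 subrr mulr0 mul0r.
Qed.

Local Notation q := #|F|.

Lemma card_Tr : #|Tr F| = (q ^ 3)%N.
Proof.
have -> : Tr F = [set phi t.1.1 t.1.2 t.2 | t in [set: F * F * F]].
  apply/setP => A; apply/idP/imsetP => [TA|[t _ ->]]; last exact: phi_Tr.
  by exists (A i0 i0, A i0 i1, A i1 i1); rewrite ?inE //; apply: Tr_phi.
rewrite card_imset ?cardsT ?card_prod; last first.
  by move=> [[x y] z] [[x' y'] z'] /= /phi_inj [-> -> ->].
by rewrite expnS expnS expn1 mulnA.
Qed.

Lemma card_Z : #|center_in (Tr F)| = q.
Proof.
have -> : center_in (Tr F) = [set phi x 0 x | x in [set: F]].
  apply/setP => A; rewrite center_char; apply/idP/imsetP => [/and3P [TA /eqP b0 /eqP d0]|[x _ ->]].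
    by exists (A i1 i1); rewrite ?inE //; rewrite {1}(Tr_phi TA) b0 d0.
  by rewrite phi_Tr phi01 phi00 phi11 !eqxx.
by rewrite card_imset ?cardsT // => x y /phi_inj [].
Qed.

Lemma Z_sub : center_in (Tr F) \subset Tr F.
Proof. by apply/subsetP => A; rewrite center_char => /andP []. Qed.

Lemma card_C (A : M) : A \in cgraph_vertices (Tr F) ->
  #|[set B in Tr F | A * B == B * A]| = (q ^ 2)%N.
Proof.
rewrite inE center_char => /andP [nZ TA]; rewrite TA /= in nZ.
set b := A i0 i1; set d := A i0 i0 - A i1 i1.
have bd : (b != 0) || (d != 0).
  by move: nZ; rewrite /d subr_eq0; case: (b == 0); case: (A i0 i0 == A i1 i1).
pose S2 := [set wy : F * F | wy.2 * d == b * wy.1].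
have cS2 : #|S2| = q.
  case: (boolP (b == 0)) bd => [/eqP b0 /= d0|b0 _].
    have -> : S2 = [set (w, 0) | w in [set: F]].
      apply/setP => -[w y]; rewrite inE /= b0 mul0r mulf_eq0 (negbTE d0) orbF.
      apply/eqP/imsetP => [->|[w' _ [_ ->]]] //; by exists w.
    by rewrite card_imset ?cardsT // => x y [].
  have -> : S2 = [set (y * d / b, y) | y in [set: F]].
    apply/setP => -[w y]; rewrite inE /=.
    apply/eqP/imsetP => [H|[y' _ [-> ->]]]; last first.
      by rewrite [b * _]mulrC divfK.
    by exists y => //; rewrite H mulrC mulKf.
  by rewrite card_imset ?cardsT // => x y [].
have -> : [set B in Tr F | A * B == B * A] =
    [set phi (t.1.1 + t.2) t.1.2 t.2 | t in setX S2 [set: F]].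
  apply/setP => B; rewrite inE; apply/andP/imsetP => [[TB]|[[[w y] z] Ht ->]].
    rewrite comm_Tr // => H.
    exists ((B i0 i0 - B i1 i1, B i0 i1), B i1 i1).
      by rewrite !inE /= andbT.
    by rewrite /= subrK {1}(Tr_phi TB).
  split; first exact: phi_Tr.
  rewrite comm_Tr ?phi_Tr // phi00 phi01 phi11 addrK.
  by move: Ht; rewrite !inE /= andbT.
rewrite card_imset ?cardsX ?cS2 ?cardsT //.
move=> [[w y] z] [[w' y'] z'] /= /phi_inj [H1 -> Hz]; subst z'.
by move/addIr: H1 ->.
Qed.
End M.

Local Close Scope ring_scope.

Lemma set2_eq (T : finType) (x y a b : T) : x != y ->
  ([set x; y] == [set a; b]) = ((x, y) == (a, b)) || ((x, y) == (b, a)).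
Proof.
move=> xy; apply/eqP/idP => [H|].
  have hx : x \in [set a; b] by rewrite -H set21.
  have hy : y \in [set a; b] by rewrite -H set22.
  clear H; move: hx hy; rewrite !in_set2 !xpair_eqE.
  case/orP => /eqP ex; case/orP => /eqP ey; subst.
  - by rewrite eqxx in xy.
  - by rewrite !eqxx.
  - by rewrite !eqxx orbT.
  - by rewrite eqxx in xy.
case/orP => /eqP [-> ->]; [by [] | exact: setUC].
Qed.

Lemma double_count (T : finType) (V : {set T}) (r : rel T) : symmetric r ->
  (2 * #|[set e : {set T} | [exists a in V, exists b in V, [&& a != b, r a b & e == [set a; b]]]]|)%N
  = #|[set ab : T * T | [&& ab.1 \in V, ab.2 \in V, ab.1 != ab.2 & r ab.1 ab.2]]|.
Proof.
move=> rs.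
set E := [set e : {set T} | _]; set P := [set ab : T * T | _].
rewrite -[#|P|]sum1_card (partition_big (fun ab => [set ab.1; ab.2]) (mem E)); last first.
  move=> [a b]; rewrite inE /= => /and4P [aV bV ab rab].
  rewrite inE; apply/exists_inP; exists a => //; apply/exists_inP; exists b => //.
  by rewrite ab rab eqxx.
rewrite /= [RHS](eq_bigr (fun _ => 2%N)); first by rewrite sum_nat_const mulnC.
move=> e; rewrite inE => /exists_inP [a aV /exists_inP [b bV /and3P [ab rab /eqP ->]]].
rewrite sum1dep_card.
have nab : ((a, b) != (b, a)) = true by rewrite xpair_eqE (negbTE ab).
transitivity #|[set (a, b); (b, a)]|; last by rewrite cards2 nab.
apply: eq_card => -[x y]; rewrite !inE /=.
apply/idP/idP => [/andP [/and4P [xV yV xy rxy] /eqP]|].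
  by move/eqP; rewrite set2_eq.
case/orP => /eqP [-> ->]; first by rewrite aV bV ab rab eqxx.
by rewrite aV bV eq_sym ab rs rab setUC eqxx.
Qed.

Local Open Scope ring_scope.

Section Main.
Variable F : finFieldType.
Local Notation M := 'M[F]_2.
Local Notation q := #|F|.
Local Notation V := (cgraph_vertices (Tr F)).
Local Notation Z := (center_in (Tr F)).

Lemma memV (S : {set M}) y : (y \in cgraph_vertices S) = (y \notin center_in S) && (y \in S).
Proof. by rewrite inE. Qed.
Lemma memC (a y : M) : (y \in [set B in Tr F | a * B == B * a]) = (y \in Tr F) && (a * y == y * a).
Proof. by rewrite inE. Qed.
Lemma memZ (S : {set M}) z : z \in center_in S -> forall b, b \in S -> z * b == b * z.
Proof. by rewrite inE => /andP [_ /forall_inP]. Qed.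

Lemma card_P :
  #|[set ab : M * M | [&& ab.1 \in cgraph_vertices (Tr F), ab.2 \in cgraph_vertices (Tr F),
      ab.1 != ab.2 & ab.1 * ab.2 == ab.2 * ab.1]]|
  = ((q ^ 3 - q) * (q ^ 2 - q - 1))%N.
Proof.
set P := [set ab : M * M | _].
rewrite -sum1_card (partition_big (fun ab => ab.1) (mem V)); last first.
  by move=> [x y]; rewrite inE /= => /and4P [].
have cV : #|V| = (q ^ 3 - q)%N by rewrite /cgraph_vertices cardsDS ?Z_sub // card_Tr card_Z.
rewrite -cV -sum_nat_const; apply: eq_bigr => a aV.
set C := [set B in Tr F | a * B == B * a].
have {}aV : a \in V by []. have aT : a \in Tr F by move: aV; rewrite memV => /andP [].
have aZ : a \notin Z by move: aV; rewrite memV => /andP [].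
have ZC : Z \subset C.
  apply/subsetP => z zZ; rewrite memC.
  have zT : z \in Tr F by move/subsetP: (Z_sub F); apply.
  by rewrite zT eq_sym (memZ zZ aT).
have aC : a \in C :\: Z by rewrite in_setD aZ memC aT eqxx.
rewrite sum1dep_card.
have -> : [set ab | (ab \in P) && (ab.1 == a)] = [set (a, b) | b in (C :\: Z) :\ a].
  apply/setP => -[x y]; rewrite in_set /P in_set /=; apply/idP/imsetP.
    case/andP => /and4P [xV yV xy cxy] /eqP ex; subst x; exists y => //.
    move: yV; rewrite memV => /andP [yZ yT].
    by rewrite in_setD1 in_setD memC eq_sym xy yZ yT cxy.
  move=> [b]; rewrite in_setD1 in_setD memC => /and4P [ba bZ bT cab] [-> ->].
  by rewrite aV memV bZ bT eq_sym ba cab eqxx.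
rewrite card_imset; last by move=> x y [].
have h1 := cardsD1 a (C :\: Z).
rewrite aC (cardsDS ZC) /C card_C // card_Z in h1.
by rewrite h1 subn1.
Qed.
End Main.

Theorem corollary2p3 (F : finFieldType) (p n : nat) :
  prime p -> (0 < n)%N -> #|F| = (p ^ n)%N ->
  (2 * #|cgraph_edges (Tr F)|)%N
    = (p ^ n * (p ^ (2 * n) - 1) * (p ^ (2 * n) - p ^ n - 1))%N.
Proof.
move=> _ _ Hq.
rewrite /cgraph_edges (@double_count _ (cgraph_vertices (Tr F)) (fun a b : 'M[F]_2 => a * b == b * a)); last first.
  by move=> x y; rewrite eq_sym.
rewrite card_P (mulnC 2 n) expnM -Hq.
by rewrite (mulnBr #|F|) muln1 -expnS.
Qed.
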